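(* For integers $s,t\ge 7$, $${\rm dim}_s(C_s\diamond C_t)=st-4\min\{\lfloor s/3\rfloor,\lfloor t/3\rfloor\}-r,$$ where $r=0$ if $\min\{s,t\}\equiv 0$ or $1 \pmod 3$; $r=1$ if $s=t$ and $\min\{s,t\}\equiv 2\pmod 3$; and $r=2$ if $s\neq t$ and $\min\{s,t\}\equiv 2\pmod 3$.
   Context: The modular product $G\diamond H$ has vertex set $V(G)\times V(H)$; distinct vertices $(g,h)$ and $(g',h')$ are adjacent iff ($g=g'$ and $hh'\in E(H)$), or ($gg'\in E(G)$ and $h=h'$), or ($gg'\in E(G)$ and $hh'\in E(H)$), or ($g\neq g'$, $h\neq h'$, $gg'\notin E(G)$ and $hh'\notin E(H)$). $C_n$ is the cycle on $n$ vertices. For a connected graph $X$, a vertex $z$ strongly resolves distinct vertices $x,y$ if $d_X(y,z)=d_X(y,x)+d_X(x,z)$ or $d_X(x,z)=d_X(x,y)+d_X(y,z)$; ${\rm dim}_s(X)$ is the minimum cardinality of a set $S\subseteq V(X)$ such that every pair of distinct vertices is strongly resolved by some vertex of $S$. *)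

(* Defs.v *)
From mathcomp Require Import all_boot.
Set Implicit Arguments. Unset Strict Implicit. Unset Printing Implicit Defensive.

(* Simple graphs: vertex finType T with adjacency relation e (symmetric, irreflexive). *)

Definition cycle_adj (n : nat) : rel 'I_n :=
  fun i j => (j == (i.+1 %% n) :> nat) || (i == (j.+1 %% n) :> nat).
Arguments cycle_adj : clear implicits.

Definition modprod (T U : finType) (eG : rel T) (eH : rel U) : rel (T * U) :=
  fun p q =>
    let: (g, h) := p in let: (g', h') := q in
    (p != q) &&
    [|| (g == g') && eH h h',
        eG g g' && (h == h'),
        eG g g' && eH h h'
      | [&& g != g', h != h', ~~ eG g g' & ~~ eH h h']].

Fixpoint reach (T : finType) (e : rel T) (k : nat) (x y : T) : bool :=
  match k with
  | 0 => x == y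
  | k'.+1 => reach e k' x y || [exists z, reach e k' x z && e z y]
  end.

(* Graph distance: least k with a walk of length k (for a connected graph this
   is attained below #|T|; otherwise it returns #|T|). *)
Definition gdist (T : finType) (e : rel T) (x y : T) : nat :=
  find (fun k => reach e k x y) (iota 0 #|T|).

Definition connected_graph (T : finType) (e : rel T) : Prop :=
  forall x y : T, exists k, reach e k x y.

Definition strongly_resolves (T : finType) (e : rel T) (z x y : T) : bool :=
  (gdist e y z == gdist e y x + gdist e x z) ||
  (gdist e x z == gdist e x y + gdist e y z).

Definition strong_resolving_set (T : finType) (e : rel T) (S : {set T}) : Prop :=
  forall x y : T, x != y -> exists2 z, z \in S & strongly_resolves e z x y.

Definition is_strong_metric_dim (T : finType) (e : rel T) (n : nat) : Prop :=
  (exists S : {set T}, strong_resolving_set e S /\ #|S| = n) /\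
  (forall S : {set T}, strong_resolving_set e S -> n <= #|S|).

(* Main.v *)
Require Import Defs.
From mathcomp Require Import all_boot.
From mathcomp Require Import zify.
Set Implicit Arguments. Unset Strict Implicit. Unset Printing Implicit Defensive.

Lemma modS_lt n a : a < n -> a.+1 %% n = if a.+1 == n then 0 else a.+1.
Proof.
move=> H; case: eqP => [->|/eqP Hne]; first by rewrite modnn.
by rewrite modn_small //; lia.
Qed.

Lemma cadjP n (a b : 'I_n) : cycle_adj n a b =
  [|| (b:nat) == a.+1, (a:nat) == b.+1, ((a:nat) == n.-1) && ((b:nat) == 0)
    | ((b:nat) == n.-1) && ((a:nat) == 0)].
Proof.
rewrite /cycle_adj (modS_lt (ltn_ord a)) (modS_lt (ltn_ord b)).
move: (ltn_ord a) (ltn_ord b).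
case: (a.+1 == n) /eqP; case: (b.+1 == n) /eqP => *; apply/idP/idP; lia.
Qed.

Definition close n (a b : 'I_n) := (a == b) || cycle_adj n a b.


Lemma cadj_irr n (a : 'I_n) : 1 < n -> cycle_adj n a a = false.
Proof. move=> Hn; rewrite cadjP; move: (ltn_ord a) => Ha; apply/negbTE/negP => H; lia. Qed.

Lemma cadj_sym n : symmetric (cycle_adj n).
Proof. by move=> a b; rewrite /cycle_adj orbC. Qed.

Lemma close_sym n : symmetric (@close n).
Proof. by move=> a b; rewrite /close eq_sym cadj_sym. Qed.

Lemma modprodE (T U : finType) (eG : rel T) (eH : rel U) p q :
  irreflexive eG -> irreflexive eH ->
  modprod eG eH p q = (p != q) && ((p.1 == q.1) || eG p.1 q.1 == (p.2 == q.2) || eH p.2 q.2).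
Proof.
move=> iG iH; case: p q => [g h] [g' h'] /=.
case: (g =P g') => [<-|Hg]; case: (h =P h') => [<-|Hh]; rewrite ?iG ?iH ?eqxx //=.
- case: (eH h h') => //=; apply/negP; by case/andP; rewrite xpair_eqE eqxx andbT; move/eqP.
- case: (eG g g') => //=; apply/negP; by case/andP; rewrite xpair_eqE eqxx andTb; move/eqP.
- rewrite /= ?andbF /=.
  by case: (eG g g'); case: (eH h h').
Qed.

Lemma closeP n (a b : 'I_n) : close a b =
  [|| (a:nat) == b, (b:nat) == a.+1, (a:nat) == b.+1, ((a:nat) == n.-1) && ((b:nat) == 0)
    | ((b:nat) == n.-1) && ((a:nat) == 0)].
Proof. by rewrite /close cadjP -val_eqE. Qed.

Lemma no_triangle n (a b c : 'I_n) : 3 < n -> a != b -> b != c -> a != c ->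
  close a b -> close b c -> close a c -> False.
Proof.
move=> Hn; rewrite -!val_eqE /= !closeP.
move: (ltn_ord a) (ltn_ord b) (ltn_ord c) => *; lia.
Qed.

Definition col n (Hn : 0 < n) (x : nat) : 'I_n := Ordinal (ltn_pmod x Hn).

Lemma colE n (Hn : 0 < n) x : (col Hn x : nat) = x %% n.
Proof. by []. Qed.

Lemma col_val n (Hn : 0 < n) (a : 'I_n) : col Hn a = a.
Proof. by apply: ord_inj; rewrite colE modn_small. Qed.

Lemma col_per n (Hn : 0 < n) x : col Hn (x + n) = col Hn x.
Proof. by apply: ord_inj; rewrite !colE modnDr. Qed.

Lemma colS n (Hn : 0 < n) x : (col Hn x.+1 : nat) = ((x %% n).+1) %% n.
Proof. by rewrite colE -addn1 -modnDml addn1. Qed.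

Lemma modpred n v : v < n -> (v + n.-1) %% n = if v == 0 then n.-1 else v.-1.
Proof.
move=> H; case: eqP => [->|/eqP Hv]; first by rewrite add0n modn_small //; lia.
have -> : v + n.-1 = v.-1 + n by lia.
by rewrite modnDr modn_small //; lia.
Qed.

Lemma modS' n x : x.+1 %% n = (x %% n).+1 %% n.
Proof. by rewrite -addn1 -modnDml addn1. Qed.

Lemma col_adj n (Hn : 0 < n) x : 2 < n ->
  (col Hn x != col Hn x.+1) && close (col Hn x) (col Hn x.+1).
Proof.
move=> H2; rewrite -val_eqE closeP /= (modS' n x).
have := ltn_pmod x Hn; set a := x %% n => Ha.
rewrite (modS_lt Ha); case: (a.+1 =P n) => E; lia.
Qed.

Lemma col_far n (Hn : 0 < n) x : 4 < n ->
  (col Hn x != col Hn x.+2) && ~~ close (col Hn x) (col Hn x.+2).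
Proof.
move=> H2; rewrite -val_eqE closeP /= (modS' n x.+1) (modS' n x).
have := ltn_pmod x Hn; set a := x %% n => Ha.
rewrite (modS_lt Ha); case: (a.+1 =P n) => E.
  rewrite modn_small; lia.
rewrite modS_lt; last lia.
case: (a.+2 =P n) => E2; lia.
Qed.

Lemma col_nb n (Hn : 0 < n) x (g : 'I_n) : 2 < n ->
  close (col Hn x.+1) g -> g != col Hn x.+1 -> g = col Hn x \/ g = col Hn x.+2.
Proof.
move=> H2; rewrite closeP -val_eqE /= (modS' n x).
have := ltn_pmod x Hn; set a := x %% n => Ha.
move: (ltn_ord g) => Hg.
rewrite (modS_lt Ha); case: (a.+1 =P n) => E.
  move=> C D.
  have [E1|E1] : (g : nat) = a \/ (g : nat) = 1 by lia.
    by left; apply: ord_inj.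
  by right; apply: ord_inj; rewrite /= (modS' n x.+1) (modS' n x) -/a (modS_lt Ha) E eqxx modn_small //; lia.
move=> C D.
have [E1|E1] : (g : nat) = a \/ (g : nat) = if a.+2 == n then 0 else a.+2.
  by case: (a.+2 =P n) => E2; lia.
  by left; apply: ord_inj.
by right; apply: ord_inj; rewrite /= (modS' n x.+1) (modS' n x) -/a (modS_lt Ha) (negbTE (introN eqP E)) modS_lt //; lia.
Qed.

Definition nbl n (u : nat) : seq nat :=
  [:: u; if u == n.-1 then 0 else u.+1; if u == 0 then n.-1 else u.-1].

Lemma nbl_in n (u w : 'I_n) : close u w -> (w : nat) \in nbl n u.
Proof.
rewrite closeP !inE; move: (ltn_ord u) (ltn_ord w) => Hu Hw.
case: ((u:nat) =P n.-1) => E1; case: ((u:nat) =P 0) => E2; lia.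
Qed.

Lemma far2 n (u v : 'I_n) : 6 < n -> exists w, ~~ close u w && ~~ close v w.
Proof.
move=> Hn.
set A := [set w : 'I_n | close u w || close v w].
have HA : #|A| <= 6.
  have U : uniq (map (@nat_of_ord n) (enum A)) by rewrite map_inj_uniq ?enum_uniq //; exact: ord_inj.
  have S : {subset map (@nat_of_ord n) (enum A) <= nbl n u ++ nbl n v}.
    move=> y /mapP [w]; rewrite mem_enum inE => /orP [] H ->; rewrite mem_cat.
      by rewrite (nbl_in H).
    by rewrite (nbl_in H) orbT.
  have := uniq_leq_size U S; rewrite size_map -cardE size_cat.
  by [].
have : exists w, w \notin A.
  apply/existsP; rewrite -negb_forall; apply/negP => /forallP H.
  have : #|[set: 'I_n]| <= #|A| by apply: subset_leq_card; apply/subsetP => w _; exact: H.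
  by rewrite cardsT card_ord; lia.
by case=> w; rewrite inE negb_or => H; exists w.
Qed.

Lemma ext_cycle n (u v : 'I_n) : 4 < n -> cycle_adj n u v ->
  exists w, cycle_adj n v w && ~~ close u w.
Proof.
move=> Hn; have Hn0 : 0 < n by lia.
rewrite cadjP => H.
have Hu := ltn_ord u; have Hv := ltn_ord v.
have [H1|H2] : ((v:nat) == u.+1) || ((u:nat) == n.-1) && ((v:nat) == 0)
     \/ ((u:nat) == v.+1) || ((v:nat) == n.-1) && ((u:nat) == 0) by lia.
- exists (col Hn0 v.+1); rewrite cadjP closeP /= (modS_lt Hv).
  case: (v.+1 =P n) => E; lia.
- exists (col Hn0 (v + n.-1)); rewrite cadjP closeP /= (modpred Hv).
  case: ((v:nat) =P 0) => E; lia.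
Qed.

Definition G s t := modprod (cycle_adj s) (cycle_adj t).

Lemma GE s t (p q : 'I_s * 'I_t) : 1 < s -> 1 < t ->
  G p q = (p != q) && (close p.1 q.1 == close p.2 q.2).
Proof.
move=> Hs Ht; rewrite /G modprodE //.
- by move=> a; apply: cadj_irr.
- by move=> a; apply: cadj_irr.
Qed.

Lemma G_sym s t : 1 < s -> 1 < t -> symmetric (@G s t).
Proof. by move=> Hs Ht p q; rewrite !GE // eq_sym (close_sym p.1) (close_sym p.2). Qed.

Lemma G_irr s t p : 1 < s -> 1 < t -> @G s t p p = false.
Proof. by move=> Hs Ht; rewrite GE // eqxx. Qed.

Lemma G_neq s t p q : 1 < s -> 1 < t -> @G s t p q -> p != q.
Proof. by move=> Hs Ht; rewrite GE // => /andP []. Qed.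

Lemma common_nb s t (x y : 'I_s * 'I_t) : 6 < s -> 6 < t ->
  exists z, G x z && G z y.
Proof.
move=> Hs Ht.
have [a /andP [Ha1 Ha2]] := far2 x.1 y.1 Hs.
have [b /andP [Hb1 Hb2]] := far2 x.2 y.2 Ht.
exists (a, b); rewrite !GE //=; try lia.
rewrite (negbTE Ha1) (negbTE Hb1) close_sym (negbTE Ha2) close_sym (negbTE Hb2) !eqxx !andbT.
apply/andP; split.
- case: x Ha1 {Hb1 Ha2 Hb2} => g h /= Ha1; apply/negP => /eqP [E _]; subst; by rewrite /close eqxx in Ha1.
- case: y Ha2 {Hb1 Ha1 Hb2} => g h /= Ha1; apply/negP => /eqP [E _]; subst; by rewrite /close eqxx in Ha1.
Qed.

Definition D s t (x y : 'I_s * 'I_t) := if x == y then 0 else if G x y then 1 else 2.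

Lemma ex1 (T : finType) (e : rel T) x y : [exists z, (x == z) && e z y] = e x y.
Proof.
apply/existsP/idP => [[z /andP [/eqP <- H]]|H] //.
by exists x; rewrite eqxx.
Qed.

Lemma gdistE s t (x y : 'I_s * 'I_t) : 6 < s -> 6 < t -> gdist (@G s t) x y = D x y.
Proof.
move=> Hs Ht.
have Hc : #|{: 'I_s * 'I_t}| = (s * t - 3).+3.
  rewrite card_prod !card_ord; nia.
rewrite /gdist Hc /= /D !ex1.
case: (x =P y) => [_|Hxy] //=.
case: (G x y) => //=.
have -> : [exists z, ((x == z) || [exists z0, (x == z0) && G z0 z]) && G z y] by
  have [z /andP [H1 H2]] := common_nb x y Hs Ht;
  apply/existsP; exists z; rewrite ex1 H1 H2 orbT.
by [].
Qed.

Definition is_clique s t (K : {set 'I_s * 'I_t}) :=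
  forall p q, p \in K -> q \in K -> p != q -> G p q.

Lemma res_far s t (x y z : 'I_s * 'I_t) : 6 < s -> 6 < t -> x != y -> ~~ G x y ->
  strongly_resolves (@G s t) z x y -> z = x \/ z = y.
Proof.
move=> Hs Ht Hxy Hg.
have Hs1 : 1 < s by lia. have Ht1 : 1 < t by lia.
rewrite /strongly_resolves !gdistE // /D (G_sym Hs1 Ht1 y x) (negbTE Hg) (eq_sym y x) (negbTE Hxy).
case: (x =P z) => [->|Hxz]; first by left.
case: (y =P z) => [->|Hyz]; first by right.
by case: (G x z); case: (G y z).
Qed.

Lemma res_clique s t (S : {set 'I_s * 'I_t}) : 6 < s -> 6 < t ->
  strong_resolving_set (@G s t) S -> is_clique (~: S).
Proof.
move=> Hs Ht HS p q; rewrite !inE => Hp Hq Hpq.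
apply/negPn/negP => Hg.
have [z Hz Hr] := HS p q Hpq.
have [E|E] := res_far Hs Ht Hpq Hg Hr; subst z.
- by rewrite Hz in Hp.
- by rewrite Hz in Hq.
Qed.

Lemma G_ext s t (x y : 'I_s * 'I_t) : 6 < s -> 6 < t -> G x y ->
  exists z, [&& G x z, ~~ G z y & z != y].
Proof.
move=> Hs Ht.
have Hs1 : 1 < s by lia. have Ht1 : 1 < t by lia.
case: x y => g h [g' h']; rewrite GE // => /andP [Hne /eqP Hc]; rewrite /= in Hc.
case Cg: (close g g').
- case: (g =P g') Cg Hne Hc => [<-|Hgg] Cg Hne Hc.
  + have Hch : close h h' by rewrite -Hc.
    have Hhh : cycle_adj t h h'.
      move: Hch; rewrite /close; case: (h =P h') => [E|_] //=.
      by subst; rewrite eqxx in Hne.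
    have [w /andP [Hw1 Hw2]] := ext_cycle (ltnW (ltnW Ht)) Hhh.
    have [a /andP [Ha _]] := far2 g g Hs.
    exists (a, w); rewrite !GE // /= (negbTE Ha) (negbTE Hw2) eqxx andbT.
    rewrite close_sym (negbTE Ha) (close_sym w) /close Hw1 orbT /=.
    have Hag : a != g by apply: contraNneq Ha => ->; rewrite /close eqxx.
    by rewrite !xpair_eqE (eq_sym g) (negbTE Hag).
  + have Hgg' : cycle_adj s g g' by move: Cg; rewrite /close; case: (g =P g').
    have [w /andP [Hw1 Hw2]] := ext_cycle (ltnW (ltnW Hs)) Hgg'.
    have [b /andP [Hb1 Hb2]] := far2 h h' Ht.
    exists (w, b); rewrite !GE // /= (negbTE Hw2) (negbTE Hb1) eqxx andbT.
    rewrite (close_sym b) (negbTE Hb2) (close_sym w) /close Hw1 orbT /=.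
    have Hbh : b != h by apply: contraNneq Hb1 => ->; rewrite /close eqxx.
    have Hbh' : b != h' by apply: contraNneq Hb2 => ->; rewrite /close eqxx.
    by rewrite !xpair_eqE (eq_sym h) (negbTE Hbh) (negbTE Hbh') !andbF.
- have [b /andP [Hb1 Hb2]] := far2 h h' Ht.
  exists (g', b); rewrite !GE // /= Cg (negbTE Hb1) eqxx andbT.
  rewrite (close_sym b) (negbTE Hb2) /close eqxx /=.
  have Hgg : g != g' by apply: contraFneq Cg => ->; rewrite /close eqxx.
  have Hbh' : b != h' by apply: contraNneq Hb2 => ->; rewrite /close eqxx.
  by rewrite !xpair_eqE (negbTE Hgg) (negbTE Hbh') andbF.
Qed.

Lemma clique_res s t (K : {set 'I_s * 'I_t}) : 6 < s -> 6 < t ->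
  is_clique K -> strong_resolving_set (@G s t) (~: K).
Proof.
move=> Hs Ht HK x y Hxy.
have Hs1 : 1 < s by lia. have Ht1 : 1 < t by lia.
case Hx: (x \in K); last first.
  exists x; first by rewrite inE Hx.
  by rewrite /strongly_resolves !gdistE // /D eqxx addn0 eqxx.
case Hy: (y \in K); last first.
  exists y; first by rewrite inE Hy.
  by rewrite /strongly_resolves !gdistE // /D eqxx addn0 eqxx orbT.
have Hg := HK x y Hx Hy Hxy.
have [z /and3P [H1 H2 H3]] := G_ext Hs Ht Hg.
exists z.
  rewrite inE; apply/negP => Hz.
  by have := HK z y Hz Hy H3; rewrite (negbTE H2).
rewrite /strongly_resolves !gdistE // /D (eq_sym y x) (negbTE Hxy) (G_sym Hs1 Ht1 y x) Hg.
rewrite (eq_sym y z) (negbTE H3) (G_sym Hs1 Ht1 y z) (negbTE H2) (negbTE (G_neq Hs1 Ht1 H1)) H1.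
by [].
Qed.

Lemma card3 (T : finType) (S : {set T}) : 2 < #|S| ->
  exists x y z, [/\ x \in S, y \in S, z \in S & [&& x != y, y != z & x != z]].
Proof.
move=> H.
have [x Hx] : exists x, x \in S by apply/card_gt0P; lia.
have H1 : 1 < #|S :\ x| by move: H; rewrite (cardsD1 x S) Hx; lia.
have [y Hy] : exists y, y \in S :\ x by apply/card_gt0P; lia.
have H2 : 0 < #|S :\ x :\ y| by move: H1; rewrite (cardsD1 y (S :\ x)) Hy; lia.
have [z Hz] : exists z, z \in S :\ x :\ y by apply/card_gt0P.
move: Hy Hz; rewrite !inE => /andP [Hyx HyS] /and3P [Hzy Hzx HzS].
by exists x, y, z; split => //; rewrite eq_sym Hyx eq_sym Hzy eq_sym Hzx.
Qed.

Lemma card_ge2 (T : finType) (S : {set T}) x : x \in S -> 1 < #|S| -> exists y, (y \in S) && (y != x).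
Proof.
move=> Hx H.
have H1 : 0 < #|S :\ x| by move: H; rewrite (cardsD1 x S) Hx; lia.
have [y Hy] : exists y, y \in S :\ x by apply/card_gt0P.
by exists y; move: Hy; rewrite !inE andbC.
Qed.

Lemma Kc s t (K : {set 'I_s * 'I_t}) p q : 1 < s -> 1 < t -> is_clique K ->
  p \in K -> q \in K -> p != q -> close p.1 q.1 = close p.2 q.2.
Proof. by move=> Hs Ht HK Hp Hq Hpq; have := HK p q Hp Hq Hpq; rewrite GE // => /andP [_ /eqP]. Qed.

Definition fib s t (Hs0 : 0 < s) (K : {set 'I_s * 'I_t}) x := [set h | (col Hs0 x, h) \in K].
Definition Af s t (Hs0 : 0 < s) (K : {set 'I_s * 'I_t}) x := #|fib Hs0 K x|.

Lemma close_refl n (a : 'I_n) : close a a.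
Proof. by rewrite /close eqxx. Qed.

Lemma fibN0 s t (Hs0 : 0 < s) (K : {set 'I_s * 'I_t}) x : 1 < s -> 3 < t -> is_clique K ->
  Af Hs0 K x <= 2.
Proof.
move=> Hs Ht HK; rewrite leqNgt; apply/negP => /card3 [a [b [c [Ha Hb Hc /and3P [Hab Hbc Hac]]]]].
move: Ha Hb Hc; rewrite !inE => Ha Hb Hc.
have Hne (u v : 'I_t) : u != v -> (col Hs0 x, u) != (col Hs0 x, v) by move=> H; rewrite xpair_eqE eqxx.
have C1 := Kc Hs (ltnW (ltnW Ht)) HK Ha Hb (Hne _ _ Hab).
have C2 := Kc Hs (ltnW (ltnW Ht)) HK Hb Hc (Hne _ _ Hbc).
have C3 := Kc Hs (ltnW (ltnW Ht)) HK Ha Hc (Hne _ _ Hac).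
rewrite /= close_refl in C1 C2 C3.
exact: (no_triangle Ht Hab Hbc Hac).
Qed.

Lemma absorb s t (Hs0 : 0 < s) (K : {set 'I_s * 'I_t}) x (c' : 'I_s) u h h' :
  1 < s -> 3 < t -> is_clique K -> (c', u) \in K -> c' != col Hs0 x ->
  close c' (col Hs0 x) -> fib Hs0 K x = [set h; h'] -> h != h' -> u \in fib Hs0 K x.
Proof.
move=> Hs Ht HK Hu Hc Hcl Hf Hhh.
have Ht1 : 1 < t by lia.
have Hh : (col Hs0 x, h) \in K.
  have : h \in fib Hs0 K x by rewrite Hf !inE eqxx.
  by rewrite inE.
have Hh' : (col Hs0 x, h') \in K.
  have : h' \in fib Hs0 K x by rewrite Hf !inE eqxx orbT.
  by rewrite inE.
have C1 := Kc Hs Ht1 HK Hu Hh; rewrite /= Hcl in C1.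
have C2 := Kc Hs Ht1 HK Hu Hh'; rewrite /= Hcl in C2.
have C3 := Kc Hs Ht1 HK Hh Hh'; rewrite /= close_refl in C3.
have Hne1 : (c', u) != (col Hs0 x, h) by rewrite xpair_eqE (negbTE Hc).
have Hne2 : (c', u) != (col Hs0 x, h') by rewrite xpair_eqE (negbTE Hc).
have Hne3 : (col Hs0 x, h) != (col Hs0 x, h') by rewrite xpair_eqE eqxx.
rewrite Hf !inE.
case: (u =P h) => [_|/eqP Hu1] //.
case: (u =P h') => [_|/eqP Hu2] //.
exfalso; exact: (no_triangle Ht Hu1 Hhh Hu2 (esym (C1 Hne1)) (esym (C3 Hne3)) (esym (C2 Hne2))).
Qed.

Lemma fib0 s t (Hs0 : 0 < s) (K : {set 'I_s * 'I_t}) x :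
  (forall v, (col Hs0 x, v) \in K -> False) -> Af Hs0 K x = 0.
Proof.
move=> H; apply/eqP; rewrite cards_eq0; apply/eqP/setP => v; rewrite !inE.
by apply/negP => /H.
Qed.

Lemma fibN1 s t (Hs0 : 0 < s) (K : {set 'I_s * 'I_t}) x : 4 < s -> 3 < t -> is_clique K ->
  0 < Af Hs0 K x.+1 -> Af Hs0 K x.+2 = 2 -> Af Hs0 K x = 0.
Proof.
move=> Hs Ht HK /card_gt0P [u Hu] /eqP/cards2P [h [h' [Hhh Hf]]].
have Hs1 : 1 < s by lia. have Ht1 : 1 < t by lia.
have /andP [A1 A2] := col_adj Hs0 x (ltnW (ltnW Hs)).
have /andP [B1 B2] := col_adj Hs0 x.+1 (ltnW (ltnW Hs)).
have /andP [F1 F2] := col_far Hs0 x Hs.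
rewrite inE in Hu.
have Hu2 := absorb Hs1 Ht HK Hu B1 B2 Hf Hhh; rewrite inE in Hu2.
apply: fib0 => v Hv.
have C1 := Kc Hs1 Ht1 HK Hv Hu; rewrite /= A2 in C1.
have C2 := Kc Hs1 Ht1 HK Hv Hu2; rewrite /= (negbTE F2) in C2.
have E1 : (col Hs0 x, v) != (col Hs0 x.+1, u) by rewrite xpair_eqE (negbTE A1).
have E2 : (col Hs0 x, v) != (col Hs0 x.+2, u) by rewrite xpair_eqE (negbTE F1).
by have := C1 E1; rewrite -(C2 E2).
Qed.

Lemma fibN2 s t (Hs0 : 0 < s) (K : {set 'I_s * 'I_t}) x : 4 < s -> 3 < t -> is_clique K ->
  0 < Af Hs0 K x.+1 -> Af Hs0 K x = 2 -> Af Hs0 K x.+2 = 0.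
Proof.
move=> Hs Ht HK /card_gt0P [u Hu] /eqP/cards2P [h [h' [Hhh Hf]]].
have Hs1 : 1 < s by lia. have Ht1 : 1 < t by lia.
have /andP [A1 A2] := col_adj Hs0 x (ltnW (ltnW Hs)).
have /andP [B1 B2] := col_adj Hs0 x.+1 (ltnW (ltnW Hs)).
have /andP [F1 F2] := col_far Hs0 x Hs.
rewrite inE in Hu.
have A1' : col Hs0 x.+1 != col Hs0 x by rewrite eq_sym.
have A2' : close (col Hs0 x.+1) (col Hs0 x) by rewrite close_sym.
have Hu2 := absorb Hs1 Ht HK Hu A1' A2' Hf Hhh.
rewrite inE in Hu2.
apply: fib0 => v Hv.
have C1 := Kc Hs1 Ht1 HK Hv Hu; rewrite /= close_sym B2 in C1.
have C2 := Kc Hs1 Ht1 HK Hv Hu2; rewrite /= close_sym (negbTE F2) in C2.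
have E1 : (col Hs0 x.+2, v) != (col Hs0 x.+1, u) by rewrite xpair_eqE eq_sym (negbTE B1).
have E2 : (col Hs0 x.+2, v) != (col Hs0 x, u) by rewrite xpair_eqE eq_sym (negbTE F1).
by have := C1 E1; rewrite -(C2 E2).
Qed.

Lemma fibN4 s t (Hs0 : 0 < s) (K : {set 'I_s * 'I_t}) x : 4 < s -> 3 < t -> is_clique K ->
  Af Hs0 K x.+1 = 2 -> Af Hs0 K x = 0 \/ Af Hs0 K x.+2 = 0.
Proof.
move=> Hs Ht HK Hf2.
have Hs1 : 1 < s by lia. have Ht1 : 1 < t by lia.
move: (Hf2) => /eqP/cards2P [h [h' [Hhh Hf]]].
case: (posnP (Af Hs0 K x)) => [-> | /card_gt0P [u Hu]]; first by left.
right.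
have /andP [A1 A2] := col_adj Hs0 x (ltnW (ltnW Hs)).
have /andP [B1 B2] := col_adj Hs0 x.+1 (ltnW (ltnW Hs)).
have /andP [F1 F2] := col_far Hs0 x Hs.
rewrite inE in Hu.
have Hu2 := absorb Hs1 Ht HK Hu A1 A2 Hf Hhh.
apply: fib0 => v Hv.
have B1' : col Hs0 x.+2 != col Hs0 x.+1 by rewrite eq_sym.
have B2' : close (col Hs0 x.+2) (col Hs0 x.+1) by rewrite close_sym.
have Hv2 := absorb Hs1 Ht HK Hv B1' B2' Hf Hhh.
have Hh : (col Hs0 x.+1, h) \in K.
  have : h \in fib Hs0 K x.+1 by rewrite Hf !inE eqxx.
  by rewrite inE.
have Hh' : (col Hs0 x.+1, h') \in K.
  have : h' \in fib Hs0 K x.+1 by rewrite Hf !inE eqxx orbT.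
  by rewrite inE.
have C3 := Kc Hs1 Ht1 HK Hh Hh'; rewrite /= close_refl in C3.
have E3 : (col Hs0 x.+1, h) != (col Hs0 x.+1, h') by rewrite xpair_eqE eqxx.
have Chh := esym (C3 E3).
have Cuv : close u v.
  move: Hu2 Hv2; rewrite Hf !inE => /orP [] /eqP -> /orP [] /eqP ->;
    by rewrite ?close_refl // close_sym.
have C := Kc Hs1 Ht1 HK Hu Hv; rewrite /= (negbTE F2) Cuv in C.
have E : (col Hs0 x, u) != (col Hs0 x.+2, v) by rewrite xpair_eqE (negbTE F1).
by have := C E.
Qed.

Definition Bf s t (Ht0 : 0 < t) (K : {set 'I_s * 'I_t}) y :=
  #|[set g | (g, col Ht0 y) \in K]|.

Lemma fibN5 s t (Hs0 : 0 < s) (Ht0 : 0 < t) (K : {set 'I_s * 'I_t}) x :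
  4 < s -> 3 < t -> is_clique K ->
  (forall y, Bf Ht0 K y != 1) ->
  Af Hs0 K x.+1 = 2 -> 0 < Af Hs0 K x \/ 0 < Af Hs0 K x.+2.
Proof.
move=> Hs Ht HK HB Hf2.
have Hs1 : 1 < s by lia. have Ht1 : 1 < t by lia.
have /card_gt0P [h Hh] : 0 < Af Hs0 K x.+1 by rewrite Hf2.
rewrite inE in Hh.
have HB1 := HB h; rewrite /Bf col_val in HB1.
have Hc1 : col Hs0 x.+1 \in [set g | (g, h) \in K] by rewrite inE.
have H2 : 1 < #|[set g | (g, h) \in K]|.
  have : 0 < #|[set g | (g, h) \in K]| by apply/card_gt0P; exists (col Hs0 x.+1).
  by move: HB1; case: #|_| => [|[|n]].
have [g' /andP [Hg' Hne]] := card_ge2 Hc1 H2.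
rewrite inE in Hg'.
have E : (g', h) != (col Hs0 x.+1, h) by rewrite xpair_eqE (negbTE Hne).
have C := Kc Hs1 Ht1 HK Hg' Hh E; rewrite /= close_refl in C.
have C' : close (col Hs0 x.+1) g' by rewrite close_sym C.
have [E1|E1] := col_nb (ltnW (ltnW Hs)) C' Hne; rewrite E1 in Hg'.
- by left; apply/card_gt0P; exists h; rewrite inE.
- by right; apply/card_gt0P; exists h; rewrite inE.
Qed.

Lemma rotsum1 (F : nat -> nat) n : F n = F 0 ->
  \sum_(0 <= x < n) F x.+1 = \sum_(0 <= x < n) F x.
Proof.
move=> H.
apply/eqP; rewrite -(eqn_add2l (F 0)) -big_nat_recl // big_nat_recr //= H addnC.
exact: eqxx.
Qed.

Lemma rotsum (F : nat -> nat) n j : (forall x, F (x + n) = F x) ->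
  \sum_(0 <= x < n) F (x + j) = \sum_(0 <= x < n) F x.
Proof.
move=> Hp; elim: j => [|j IH].
  by apply: eq_bigr => x _; rewrite addn0.
rewrite -IH.
have E := rotsum1 (F := fun y => F (y + j)) (n := n).
rewrite /= add0n addnC Hp in E.
rewrite -(E erefl).
by apply: eq_bigr => x _; rewrite addnS addSn.
Qed.

Lemma sum_add (F : nat -> nat) a b :
  \sum_(0 <= x < a + b) F x = \sum_(0 <= x < a) F x + \sum_(0 <= x < b) F (a + x).
Proof.
elim: b => [|b IH]; first by rewrite addn0 [X in _ + X]big_geq // addn0.
rewrite addnS !big_nat_recr //= ?IH; lia.
Qed.

Lemma sum3 (F : nat -> nat) k :
  \sum_(0 <= x < 3 * k) F x = \sum_(0 <= i < k) (F (3 * i) + F (3 * i).+1 + F (3 * i).+2).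
Proof.
elim: k => [|k IH]; first by rewrite muln0 !big_geq.
rewrite [in RHS]big_nat_recr //= -IH (_ : 3 * k.+1 = 3 * k + 3); last by lia.
rewrite sum_add; congr (_ + _).
rewrite !big_nat_recr //= big_geq //; by rewrite add0n addn0 addn1 addn2.
Qed.

Lemma sum_le (F : nat -> nat) c k : (forall i, F i <= c) -> \sum_(0 <= i < k) F i <= c * k.
Proof.
move=> H; elim: k => [|k IH]; first by rewrite big_geq.
by rewrite big_nat_recr //= mulnS; have := H k; lia.
Qed.

Lemma sum_const1 k : \sum_(0 <= i < k) 1 = k.
Proof. by elim: k => [|k IH]; [rewrite big_geq | rewrite big_nat_recr //= IH addn1]. Qed.

Lemma sum2 (F : nat -> nat) : \sum_(0 <= x < 2) F x = F 0 + F 1.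
Proof. by rewrite big_ltn // big_ltn // big_geq // addn0. Qed.

Lemma sum_lin (f g : nat -> nat) n :
  \sum_(0 <= x < n) (2 * (f x + g x)) = 2 * (\sum_(0 <= x < n) f x + \sum_(0 <= x < n) g x).
Proof.
elim: n => [|n IH]; first by rewrite !big_geq.
by rewrite !big_nat_recr //= IH; lia.
Qed.

Section Count.
Variables (n : nat) (A : nat -> nat).
Hypothesis Hn : 6 < n.
Hypothesis Hper : forall x, A (x + n) = A x.
Hypothesis H0 : forall x, A x <= 2.
Hypothesis H1 : forall x, 0 < A x.+1 -> A x.+2 = 2 -> A x = 0.
Hypothesis H2 : forall x, 0 < A x.+1 -> A x = 2 -> A x.+2 = 0.
Hypothesis H4 : forall x, A x.+1 = 2 -> A x = 0 \/ A x.+2 = 0.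

Definition W x := A x + A x.+1 + A x.+2.

Lemma Wle x : W x <= 4.
Proof.
rewrite /W; have := H0 x; have := H0 x.+1; have := H0 x.+2.
have := @H1 x; have := @H2 x; have := @H4 x; lia.
Qed.

Lemma Wone x : A x = 1 \/ A x.+1 = 1 \/ A x.+2 = 1 -> W x <= 3.
Proof.
rewrite /W; have := H0 x; have := H0 x.+1; have := H0 x.+2.
have := @H1 x; have := @H2 x; have := @H4 x; lia.
Qed.

Definition T := \sum_(0 <= x < n) A x.

Lemma decomp q k r : n = 3 * k + r ->
  T = \sum_(0 <= i < k) W (3 * i + q) + \sum_(0 <= x < r) A (3 * k + x + q).
Proof.
move=> E.
rewrite /T -(rotsum (F := A) q Hper) E sum_add sum3.
by congr (_ + _).
Qed.

Lemma sumW q k : \sum_(0 <= i < k) W (3 * i + q) <= 4 * k.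
Proof. by apply: sum_le => i; apply: Wle. Qed.

Lemma sumW1 q k : 0 < k -> W q <= 3 -> \sum_(0 <= i < k) W (3 * i + q) <= 4 * k - 1.
Proof.
case: k => [//|k] _ Hq.
rewrite big_nat_recl // muln0 add0n.
have := @sum_le (fun i => W (3 * i.+1 + q)) 4 k (fun i => Wle _).
lia.
Qed.

Definition fN := 4 * (n %/ 3) + (if n %% 3 == 2 then 2 else 0).

Lemma upper0 : T <= fN.
Proof.
have Hk : n = 3 * (n %/ 3) + n %% 3 by rewrite {1}(divn_eq n 3); lia.
set k := n %/ 3 in Hk *; set r := n %% 3 in Hk *.
rewrite /fN -/k -/r.
have Hr : r < 3 by rewrite /r ltn_mod.
have Hk2 : 2 <= k by rewrite /k; lia.
case: r Hk Hr => [|[|[|r]]] //= Hk _.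
- rewrite addn0 (decomp 0 Hk) [X in _ + X]big_geq // addn0; exact: sumW.
-
  rewrite leqNgt; apply/negP => HT.
  have Hpos : forall y, 0 < A y.
    move=> y; have := decomp y.+1 Hk; rewrite big_nat1 ?add0n ?addn0.
    rewrite (_ : 3 * k + y.+1 = y + n); last by lia.
    rewrite Hper; have := sumW y.+1 k; lia.
  have Hone : forall y, A y = 1.
    move=> y; have := H0 y.
    have := Hpos y; rewrite -Hper (_ : y + n = (y + n).-1.+1); last by lia.
    move=> P1 P2.
    have := @H4 (y + n).-1; have := Hpos (y + n).-1; have := Hpos (y + n).-1.+2; lia.
  have : T = n.
    by rewrite /T -[in RHS](sum_const1 n); apply: eq_bigr => y _; rewrite Hone.
  lia.
-
  rewrite leqNgt; apply/negP => HT.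
  have Hpair : forall y, 3 <= A y + A y.+1.
    move=> y; have := decomp y.+2 Hk.
    rewrite sum2 addn0 addn1.
    rewrite (_ : (3 * k + y.+2) = y + n); last by lia.
    rewrite (_ : (3 * k).+1 + y.+2 = y.+1 + n); last by lia.
    rewrite !Hper; have := sumW y.+2 k; lia.
  have := Hpair 0; have := Hpair 1; have := Hpair 2.
  have := @H4 0; have := @H4 1; have := H0 0; have := H0 1; have := H0 2; have := H0 3.
  lia.
Qed.

Lemma no_one : n %% 3 == 2 -> fN <= T -> forall y, A y != 1.
Proof.
move=> Hr HT y; apply/eqP => Hy.
have Hk : n = 3 * (n %/ 3) + 2 by rewrite {1}(divn_eq n 3) (eqP Hr); lia.
move: HT; rewrite /fN Hr.
set k := n %/ 3 in Hk *.
have Hk2 : 2 <= k by rewrite /k; lia.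
set Q := y + n - 4.
have HQ4 : A Q.+4 = 1 by rewrite (_ : Q.+4 = y + n) ?Hper //; rewrite /Q; lia.
have D1 := decomp Q.+4 Hk; rewrite sum2 in D1.
rewrite (_ : 3 * k + 0 + Q.+4 = Q.+2 + n) in D1; last by rewrite /Q; lia.
rewrite (_ : 3 * k + 1 + Q.+4 = Q.+3 + n) in D1; last by rewrite /Q; lia.
rewrite !Hper in D1.
have D2 := decomp Q.+2 Hk; rewrite sum2 in D2.
rewrite (_ : 3 * k + 0 + Q.+2 = Q + n) in D2; last by rewrite /Q; lia.
rewrite (_ : 3 * k + 1 + Q.+2 = Q.+1 + n) in D2; last by rewrite /Q; lia.
rewrite !Hper in D2.
have W1 : W Q.+4 <= 3 by apply: Wone; left.
have W2 : W Q.+2 <= 3 by apply: Wone; right; right.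
have S1 := sumW1 (q := Q.+4) (k := k) (ltn_trans (isT : 0 < 1) Hk2) W1.
have S2 := sumW1 (q := Q.+2) (k := k) (ltn_trans (isT : 0 < 1) Hk2) W2.
have := H0 Q; have := H0 Q.+1; have := H0 Q.+2; have := H0 Q.+3.
have := @H1 Q.+1; have := @H2 Q.+2.
lia.
Qed.

Definition E x := nat_of_bool ((A x == 2) && (A x.+1 == 2)).

Lemma parity : (forall y, A y != 1) ->
  (forall x, A x.+1 = 2 -> 0 < A x \/ 0 < A x.+2) -> T = 4 * \sum_(0 <= x < n) E x.
Proof.
move=> Hno H5.
have Hpt : forall x, A x.+1 = 2 * (E x + E x.+1).
  move=> x; have := H0 x; have := H0 x.+1; have := H0 x.+2.
  have := Hno x; have := Hno x.+1; have := Hno x.+2.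
  have := @H4 x; have := H5 x.
  rewrite /E; case: (A x =P 2); case: (A x.+1 =P 2); case: (A x.+2 =P 2) => /=; lia.
have EP : E n = E 0.
  by rewrite /E -(Hper 0) -(Hper 1) add0n add1n.
rewrite /T -rotsum1; last by rewrite -(Hper 0) add0n.
rewrite (eq_bigr (fun x => 2 * (E x + E x.+1))); last by move=> x _; exact: Hpt.
rewrite sum_lin (rotsum1 EP); lia.
Qed.
End Count.

Lemma card_fib s t (Hs0 : 0 < s) (K : {set 'I_s * 'I_t}) :
  #|K| = \sum_(0 <= x < s) Af Hs0 K x.
Proof.
rewrite big_mkord.
rewrite (eq_bigr (fun g : 'I_s => \sum_(h | (g, h) \in K) 1)); last first.
  move=> g _; rewrite /Af /fib col_val -sum1_card; apply: eq_bigl => h; by rewrite inE.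
rewrite pair_big_dep /= -sum1_card; apply: eq_bigl => -[g h] /=.
by [].
Qed.

Lemma Af_per s t (Hs0 : 0 < s) (K : {set 'I_s * 'I_t}) x : Af Hs0 K (x + s) = Af Hs0 K x.
Proof. by rewrite /Af /fib col_per. Qed.

Definition swapK s t (K : {set 'I_s * 'I_t}) : {set 'I_t * 'I_s} := [set (p.2, p.1) | p in K].

Lemma swap_inj s t : injective (fun p : 'I_s * 'I_t => (p.2, p.1)).
Proof. by move=> [a b] [c d] /= [-> ->]. Qed.

Lemma mem_swap s t (K : {set 'I_s * 'I_t}) a b : ((a, b) \in swapK K) = ((b, a) \in K).
Proof.
rewrite -[(a, b)]/((fun p : 'I_s * 'I_t => (p.2, p.1)) (b, a)).
by rewrite mem_imset //; exact: swap_inj.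
Qed.

Lemma card_swap s t (K : {set 'I_s * 'I_t}) : #|swapK K| = #|K|.
Proof. by rewrite card_imset //; exact: swap_inj. Qed.

Lemma swap_clique s t (K : {set 'I_s * 'I_t}) : 1 < s -> 1 < t -> is_clique K -> is_clique (swapK K).
Proof.
move=> Hs Ht HK [a b] [c d]; rewrite !mem_swap => H1 H2 Hne.
have Hne' : (b, a) != (d, c) by apply: contraNneq Hne => -[-> ->].
have := HK _ _ H1 H2 Hne'; rewrite !GE //= => /andP [_ /eqP ->].
by rewrite Hne eqxx.
Qed.

Lemma Bf_swap s t (Ht0 : 0 < t) (K : {set 'I_s * 'I_t}) y : Bf Ht0 K y = Af Ht0 (swapK K) y.
Proof. by rewrite /Bf /Af /fib; apply: eq_card => g; rewrite !inE mem_swap. Qed.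

Lemma clique_bound s t (K : {set 'I_s * 'I_t}) : 6 < s -> 6 < t -> is_clique K -> #|K| <= fN s.
Proof.
move=> Hs Ht HK.
have Hs0 : 0 < s by lia.
rewrite (card_fib Hs0).
apply: (upper0 (A := Af Hs0 K)) => //.
- by move=> x; apply: Af_per.
- by move=> x; apply: fibN0 => //; lia.
- by move=> x; apply: fibN1 => //; lia.
- by move=> x; apply: fibN2 => //; lia.
- by move=> x; apply: fibN4 => //; lia.
Qed.

Lemma clique_bound_eq s (K : {set 'I_s * 'I_s}) : 6 < s -> is_clique K -> s %% 3 == 2 ->
  #|K| < fN s.
Proof.
move=> Hs HK Hr.
have Hs0 : 0 < s by lia.
have Hs1 : 1 < s by lia.
rewrite ltnNge; apply/negP => HT.
have Hno : forall K' : {set 'I_s * 'I_s}, is_clique K' -> fN s <= #|K'| ->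
    forall y, Af Hs0 K' y != 1.
  move=> K' HK' HT'; apply: (no_one (n := s)) => //.
  - by move=> x; apply: Af_per.
  - by move=> x; apply: fibN0 => //; lia.
  - by move=> x; apply: fibN1 => //; lia.
  - by move=> x; apply: fibN2 => //; lia.
  - by move=> x; apply: fibN4 => //; lia.
  - by rewrite /T -card_fib.
have HA := Hno K HK HT.
have HB : forall y, Bf Hs0 K y != 1.
  move=> y; rewrite Bf_swap; apply: Hno; first exact: swap_clique.
  by rewrite card_swap.
have P : #|K| = 4 * \sum_(0 <= x < s) E (Af Hs0 K) x.
  rewrite (card_fib Hs0); apply: parity => //.
  - by move=> x; apply: Af_per.
  - by move=> x; apply: fibN0 => //; lia.
  - by move=> x; apply: fibN4 => //; lia.
  - by move=> x; apply: fibN5 => //; lia.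
have := clique_bound Hs Hs HK.
move: HT; rewrite P /fN Hr; lia.
Qed.

Lemma lin_close n (Hn : 0 < n) a a' : a.+1 < n -> a'.+1 < n ->
  close (col Hn a) (col Hn a') = (a <= a'.+1) && (a' <= a.+1).
Proof.
move=> H1 H2; rewrite closeP /= !modn_small; try lia.
Qed.

Lemma lin_eq n (Hn : 0 < n) a a' : a < n -> a' < n -> (col Hn a == col Hn a') = (a == a').
Proof. by move=> H1 H2; rewrite -val_eqE /= !modn_small. Qed.

Section Constr.
Variables (s t : nat) (Hs : 6 < s) (Ht : 6 < t).
Let Hs0 : 0 < s. Proof. by lia. Qed.
Let Ht0 : 0 < t. Proof. by lia. Qed.
Definition kk := minn (s %/ 3) (t %/ 3).
Definition mm := minn s t.

Definition fblk (p : 'I_kk * bool * bool) : 'I_s * 'I_t :=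
  (col Hs0 (3 * p.1.1 + p.1.2), col Ht0 (3 * p.1.1 + p.2)).

Definition Blk := fblk @: setT.

Definition Ex : {set 'I_s * 'I_t} :=
  if mm %% 3 == 2 then
    (if s == t then [set (col Hs0 (3 * kk), col Ht0 (3 * kk))]
     else if s < t then [set (col Hs0 (3 * kk), col Ht0 (3 * kk)); (col Hs0 (3 * kk), col Ht0 (3 * kk).+1)]
     else [set (col Hs0 (3 * kk), col Ht0 (3 * kk)); (col Hs0 (3 * kk).+1, col Ht0 (3 * kk))])
  else set0.

Definition K0 := Blk :|: Ex.

Definition Qp (a b : nat) :=
  (exists i x y, [/\ i < kk, x < 2, y < 2, a = 3 * i + x & b = 3 * i + y]) \/
  [/\ mm %% 3 = 2, a = 3 * kk & b = 3 * kk] \/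
  [/\ mm %% 3 = 2, s < t, a = 3 * kk & b = (3 * kk).+1] \/
  [/\ mm %% 3 = 2, t < s, a = (3 * kk).+1 & b = 3 * kk].

Lemma K0_rep p : p \in K0 -> exists a b, [/\ p = (col Hs0 a, col Ht0 b), a.+1 < s, b.+1 < t & Qp a b].
Proof.
have Hk : 3 * kk <= s /\ 3 * kk <= t by rewrite /kk; lia.
rewrite /K0 inE => /orP [].
- case/imsetP => -[[i x] y] _ ->.
  exists (3 * i + x), (3 * i + y); split => //.
  + have := ltn_ord i; case: x; lia.
  + have := ltn_ord i; case: y; lia.
  + by left; exists i, x, y; split => //; case: x; case: y.
- rewrite /Ex; case: ifP => Hm; last by rewrite inE.
  have Hm' : mm %% 3 = 2 by apply/eqP.
  have Hkm : mm = 3 * kk + 2 by rewrite /kk /mm in Hm' *; lia.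
  case: ifP => Hst.
    rewrite inE => /eqP ->; exists (3 * kk), (3 * kk); split => //; try (rewrite /mm in Hkm; lia).
    by right; left.
  case: ifP => Hlt; rewrite !inE => /orP [] /eqP ->.
  + exists (3 * kk), (3 * kk); split => //; try (rewrite /mm in Hkm; lia).
    by right; left.
  + exists (3 * kk), (3 * kk).+1; split => //; try (rewrite /mm in Hkm; lia).
    by right; right; left.
  + exists (3 * kk), (3 * kk); split => //; try (rewrite /mm in Hkm; lia).
    by right; left.
  + exists (3 * kk).+1, (3 * kk); split => //; try (rewrite /mm in Hkm; move/eqP: Hst; lia).
    by right; right; right; split => //; move/eqP: Hst; lia.
Qed.

Lemma K0_clique : is_clique K0.
Proof.
move=> p q /K0_rep [a [b [-> Ha Hb Q1]]] /K0_rep [a' [b' [-> Ha' Hb' Q2]]] Hne.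
rewrite GE; try lia.
rewrite Hne /= !lin_close //.
have Hne' : (a != a') || (b != b').
  apply: contraNT Hne; rewrite negb_or !negbK => /andP [/eqP -> /eqP ->]; by rewrite eqxx.
move: Hne'.
case: Q1 => [[i [x [y [Hi Hx Hy E1 E2]]]]|[[M1 E1 E2]|[[M1 L1 E1 E2]|[M1 L1 E1 E2]]]];
case: Q2 => [[i' [x' [y' [Hi' Hx' Hy' E1' E2']]]]|[[M1' E1' E2']|[[M1' L1' E1' E2']|[M1' L1' E1' E2']]]];
subst; lia.
Qed.

Lemma fblk_inj : injective fblk.
Proof.
have Hk : 3 * kk <= s /\ 3 * kk <= t by rewrite /kk; lia.
move=> [[i x] y] [[i' x'] y']; rewrite /fblk /= => -[/eqP E1 /eqP E2].
have Hi := ltn_ord i; have Hi' := ltn_ord i'.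
have L1 : 3 * i + x < s by have := leq_b1 x; lia.
have L2 : 3 * i' + x' < s by have := leq_b1 x'; lia.
have L3 : 3 * i + y < t by have := leq_b1 y; lia.
have L4 : 3 * i' + y' < t by have := leq_b1 y'; lia.
rewrite !modn_small // in E1 E2.
have B1 := leq_b1 x; have B2 := leq_b1 x'; have B3 := leq_b1 y; have B4 := leq_b1 y'.
have Ei : i = i' by apply: ord_inj; lia.
subst i'.
have Ex : (x : nat) = x' by lia.
have Ey : (y : nat) = y' by lia.
clear -Ex Ey; move: Ex Ey; case: x; case: x'; case: y; case: y' => //.
Qed.

Lemma card_Blk : #|Blk| = 4 * kk.
Proof. by rewrite card_imset; [rewrite cardsT !card_prod card_ord card_bool; lia | exact: fblk_inj]. Qed.

Definition rr := if (mm %% 3 == 0) || (mm %% 3 == 1) then 0 else if s == t then 1 else 2.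

Lemma card_Ex : #|Ex| = rr.
Proof.
rewrite /Ex /rr.
have Hk : 3 * kk <= s /\ 3 * kk <= t by rewrite /kk; lia.
case: ifP => Hm.
  have Hm' : mm %% 3 = 2 by apply/eqP.
  have Hkm : mm = 3 * kk + 2 by rewrite /kk /mm in Hm' *; lia.
  rewrite Hm'; case: ifP => Hst; first by rewrite cards1.
  rewrite /mm in Hkm.
  case: ifP => Hlt; rewrite cards2 xpair_eqE lin_eq ?lin_eq ?eqxx /=; try (move/eqP: Hst; lia).
rewrite cards0; have : mm %% 3 < 3 by rewrite ltn_mod.
by move/negbT: Hm; case: (mm %% 3) => [|[|[|]]].
Qed.

Lemma disj : Blk :&: Ex = set0.
Proof.
have Hk : 3 * kk <= s /\ 3 * kk <= t by rewrite /kk; lia.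
apply/setP => p; rewrite !inE; apply/negbTE/negP => /andP [/imsetP [[[i x] y] _ ->] He].
have Hi := ltn_ord i.
move: He; rewrite /Ex; case: ifP => Hm; last by rewrite inE.
have Hm' : mm %% 3 = 2 by apply/eqP.
have Hkm : mm = 3 * kk + 2 by rewrite /kk /mm in Hm' *; lia.
rewrite /mm in Hkm.
case: ifP => Hst; [|case: ifP => Hlt]; rewrite !inE ?xpair_eqE;
  [ | move/orP=> [] | move/orP=> []]; move=> /andP [/eqP E _];
  move: (congr1 (@nat_of_ord s) E); rewrite /= !modn_small; try (case: x; lia); try (move/eqP: Hst; lia).
Qed.

Lemma card_K0 : #|K0| = 4 * kk + rr.
Proof. by rewrite /K0 cardsU disj cards0 subn0 card_Blk card_Ex. Qed.
End Constr.

Lemma clique_final s t (K : {set 'I_s * 'I_t}) : 6 < s -> 6 < t -> is_clique K ->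
  #|K| <= 4 * minn (s %/ 3) (t %/ 3) +
     (if (minn s t %% 3 == 0) || (minn s t %% 3 == 1) then 0 else if s == t then 1 else 2).
Proof.
move=> Hs Ht HK.
have B1 := clique_bound Hs Ht HK.
have Hs1 : 1 < s by lia. have Ht1 : 1 < t by lia.
have B2 := clique_bound Ht Hs (swap_clique Hs1 Ht1 HK).
rewrite card_swap in B2.
case: (s =P t) => [E|NE].
  subst t.
  have B3 := clique_bound_eq Hs HK.
  move: B1 B3; rewrite /fN minnn ?eqxx.
  by do ![case: ifP => ?]; lia.
move: B1 B2; rewrite /fN.
by do ![case: ifP => ?]; lia.
Qed.

Theorem mainTheorem10 (s t : nat) (hs : 7 <= s) (ht : 7 <= t) :
  let m := minn s t in
  let r := if (m %% 3 == 0) || (m %% 3 == 1) then 0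
           else if s == t then 1 else 2 in
  is_strong_metric_dim (modprod (cycle_adj s) (cycle_adj t))
    (s * t - 4 * minn (s %/ 3) (t %/ 3) - r).
Proof.
move=> m r.
have Hs : 6 < s := hs.
have Ht : 6 < t := ht.
change (modprod (cycle_adj s) (cycle_adj t)) with (@G s t).
have Hcard : forall S : {set 'I_s * 'I_t}, #|S| + #|~: S| = s * t.
  by move=> S; rewrite cardsC card_prod !card_ord.
split.
- exists (~: K0 Hs Ht); split.
    exact: (@clique_res s t (K0 Hs Ht) Hs Ht (@K0_clique s t Hs Ht)).
  have := Hcard (K0 Hs Ht); rewrite card_K0 /kk /rr -/m -/r; move=> H.
  have H' : 4 * minn (s %/ 3) (t %/ 3) + r + #|~: K0 Hs Ht| = s * t := H.
  clear H Hcard; clearbody r m; lia.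
- move=> S HS.
  have HK := res_clique Hs Ht HS.
  have B := clique_final Hs Ht HK; rewrite -/m -/r in B.
  have B' : #|~: S| <= 4 * minn (s %/ 3) (t %/ 3) + r := B.
  have C : #|S| + #|~: S| = s * t := Hcard S.
  clear B Hcard; clearbody r m; lia.
Qed.
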